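(* Let $X$ be a dendric shift over $\mathcal{A}_3=\{1,2,3\}$ and let $Y$ be the image of $X$ under a morphism $\sigma\in\mathcal{S}_3$. Then $Y$ is dendric if and only if $\sigma\in\mathrm{DP}(X)$.
   Context: A shift space over $\mathcal{A}$ is a closed shift-invariant $X\subseteq\mathcal{A}^{\mathbb{Z}}$ in which all letters occur, with factor set $\mathcal{L}(X)$. For $w\in\mathcal{L}(X)$, $\mathcal{E}_X(w)$ is the bipartite graph with left vertices $\{a:aw\in\mathcal{L}(X)\}$, right vertices $\{b:wb\in\mathcal{L}(X)\}$, edges $\{a,b\}$ for $awb\in\mathcal{L}(X)$; $w$ is bispecial if it has at least two left and two right vertices, dendric if $\mathcal{E}_X(w)$ is a tree; $X$ is dendric if all its factors are dendric. $\mathcal{S}_3=\{\alpha,\beta,\gamma,\eta\}\cup\{\delta^{(k)},\zeta^{(k)}:k\ge1\}$ with $\alpha:1\mapsto1,2\mapsto12,3\mapsto13$; $\beta:1\mapsto1,2\mapsto12,3\mapsto132$; $\gamma:1\mapsto1,2\mapsto12,3\mapsto123$; $\delta^{(k)}:1\mapsto1,2\mapsto123^k,3\mapsto123^{k+1}$; $\zeta^{(k)}:1\mapsto13^k,2\mapsto12,3\mapsto13^{k+1}$; $\eta:1\mapsto13,2\mapsto12,3\mapsto123$. The image of $X$ under $\sigma$ is $Y=\{S^k\sigma(x):x\in X,0\le k<|\sigma(x_0)|\}$. For non-empty $u\in\mathcal{L}(Y)$ containing $1$ there is a unique triple $(s,v,p)$, $v\in\mathcal{L}(X)$, $u=s\sigma(v)p$,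 with $s$ a proper suffix of $\sigma(a)$ and $p$ a non-empty prefix of $\sigma(b)$ for some $a,b$ with $avb\in\mathcal{L}(X)$; $u$ is an extended image of $v$. $\mathrm{DP}(X)$ is the set of $\sigma\in\mathcal{S}_3$ such that for every $v\in\mathcal{L}(X)$, every bispecial extended image of $v$ under $\sigma$ is dendric in $Y$. *)

(* Defs.v *)
From mathcomp Require Import all_boot all_algebra.
Set Implicit Arguments. Unset Strict Implicit. Unset Printing Implicit Defensive.

(* Alphabet A_3 = {1,2,3}, encoded as 'I_3 with letter i+1 represented by i. *)
Definition letter := 'I_3.
Definition l1 : letter := @Ordinal 3 0 isT.
Definition l2 : letter := @Ordinal 3 1 isT.
Definition l3 : letter := @Ordinal 3 2 isT.

Definition word := seq letter.
Definition config := int -> letter.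
Definition subshift := config -> Prop.

Definition shift (x : config) : config := fun n => x (n + 1)%R.
Definition shiftn (k : nat) (x : config) : config := fun n => x (n + k%:Z)%R.

Definition occurs_at (w : word) (x : config) (i : int) : Prop :=
  forall k : nat, k < size w -> nth l1 w k = x (i + k%:Z)%R.

Definition lang (X : subshift) (w : word) : Prop :=
  exists x, X x /\ exists i, occurs_at w x i.

(* closedness in the product topology: every x whose central windows all
   agree with some element of X belongs to X *)
Definition closed_sub (X : subshift) : Prop :=
  forall x : config,
    (forall n : nat, exists y, X y /\ forall i : int, (`|i| <= n)%N -> y i = x i) ->
    X x.

Definition shift_invariant (X : subshift) : Prop :=
  forall x, X x <-> X (shift x).

Definition shift_space (X : subshift) : Prop :=
  [/\ closed_sub X, shift_invariant X & forall a : letter, lang X [:: a]].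

(* vertices: inl a (left copy), inr b (right copy) *)
Definition vtx := (letter + letter)%type.

Definition is_vertex (X : subshift) (w : word) (v : vtx) : Prop :=
  match v with
  | inl a => lang X (a :: w)
  | inr b => lang X (rcons w b)
  end.

Definition ext_edge (X : subshift) (w : word) (u v : vtx) : Prop :=
  match u, v with
  | inl a, inr b => lang X (a :: rcons w b)
  | inr b, inl a => lang X (a :: rcons w b)
  | _, _ => False
  end.

Fixpoint ppath (T : Type) (e : T -> T -> Prop) (x : T) (p : seq T) : Prop :=
  match p with
  | [::] => True
  | y :: p' => e x y /\ ppath e y p'
  end.

Definition graph_connected (V : vtx -> Prop) (e : vtx -> vtx -> Prop) : Prop :=
  forall u v, V u -> V v ->
    exists p : seq vtx, ppath e u p /\ last u p = v.

Definition graph_acyclic (V : vtx -> Prop) (e : vtx -> vtx -> Prop) : Prop :=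
  ~ exists (x : vtx) (p : seq vtx),
      [/\ V x, (forall y, y \in p -> V y), uniq (x :: p), 2 < size (x :: p)
        & ppath e x (rcons p x)].

Definition is_tree (V : vtx -> Prop) (e : vtx -> vtx -> Prop) : Prop :=
  graph_connected V e /\ graph_acyclic V e.

Definition dendric_word (X : subshift) (w : word) : Prop :=
  is_tree (is_vertex X w) (ext_edge X w).

Definition bispecial (X : subshift) (w : word) : Prop :=
  (exists a a' : letter, a != a' /\ lang X (a :: w) /\ lang X (a' :: w)) /\
  (exists b b' : letter, b != b' /\ lang X (rcons w b) /\ lang X (rcons w b')).

Definition dendric_shift (X : subshift) : Prop :=
  forall w, lang X w -> dendric_word X w.

Inductive S3 : Type :=
| Alpha | Beta | Gamma | Eta
| Delta of nat   (* Delta k = delta^(k), requires k >= 1 *)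
| Zeta of nat.   (* Zeta k  = zeta^(k),  requires k >= 1 *)

Definition in_S3 (s : S3) : bool :=
  match s with Delta k | Zeta k => 0 < k | _ => true end.

Definition morph (s : S3) (a : letter) : word :=
  match s with
  | Alpha => if a == l1 then [:: l1] else if a == l2 then [:: l1; l2] else [:: l1; l3]
  | Beta  => if a == l1 then [:: l1] else if a == l2 then [:: l1; l2] else [:: l1; l3; l2]
  | Gamma => if a == l1 then [:: l1] else if a == l2 then [:: l1; l2] else [:: l1; l2; l3]
  | Eta   => if a == l1 then [:: l1; l3] else if a == l2 then [:: l1; l2] else [:: l1; l2; l3]
  | Delta k => if a == l1 then [:: l1] else if a == l2 then [:: l1, l2 & nseq k l3]
               else [:: l1, l2 & nseq k.+1 l3]
  | Zeta k => if a == l1 then l1 :: nseq k l3 else if a == l2 then [:: l1; l2]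
              else l1 :: nseq k.+1 l3
  end.

Definition morphw (s : S3) (v : word) : word := flatten (map (morph s) v).

(* letter at position n of f 0 ++ f 1 ++ f 2 ++ ... (blocks assumed nonempty) *)
Fixpoint nthcat (f : nat -> word) (fuel n : nat) : letter :=
  match fuel with
  | 0 => l1
  | fuel'.+1 =>
      if n < size (f 0) then nth l1 (f 0) n
      else nthcat (fun i => f i.+1) fuel' (n - size (f 0))
  end.

(* sigma(x) = ... sigma(x_{-1}) . sigma(x_0) sigma(x_1) ..., with sigma(x_0)
   starting at position 0 *)
Definition morphx (s : S3) (x : config) : config := fun n =>
  match n with
  | Posz m => nthcat (fun i => morph s (x (Posz i))) m.+1 m
  | Negz m => nthcat (fun i => rev (morph s (x (- Posz i.+1)%R))) m.+1 m
  end.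

Definition morph_image (s : S3) (X : subshift) : subshift := fun y =>
  exists x, X x /\ exists k : nat, k < size (morph s (x 0)) /\
    forall n, y n = shiftn k (morphx s x) n.

Definition ext_image (s : S3) (X : subshift) (u v : word) : Prop :=
  [/\ u != [::], lang (morph_image s X) u, l1 \in u &
   exists (a b : letter) (sf pf : word),
     [/\ lang X (a :: rcons v b),
         (exists t, t != [::] /\ morph s a = t ++ sf),
         (pf != [::] /\ exists t, morph s b = pf ++ t)
       & u = sf ++ morphw s v ++ pf]].

Definition DP (X : subshift) (s : S3) : Prop :=
  forall v, lang X v -> forall u, ext_image s X u v ->
    bispecial (morph_image s X) u -> dendric_word (morph_image s X) u.

(* Main.v *)
Require Import Defs.
From Stdlib Require Classical_Prop.
From mathcomp Require Import all_boot all_algebra zify.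
Set Implicit Arguments. Unset Strict Implicit. Unset Printing Implicit Defensive.

Lemma size_morph s a : 0 < size (morph s a).
Proof. by case: s => [||||k|k]; rewrite /morph; case: ifP => _; try case: ifP => _. Qed.

Lemma mkseqSl (T : Type) (f : nat -> T) n : mkseq f n.+1 = f 0 :: mkseq (fun i => f i.+1) n.
Proof. rewrite /mkseq /=; have := iotaDl 1 0 n; rewrite addn0 => ->.
by rewrite -map_comp; congr cons; apply: eq_map => i /=; rewrite add1n. Qed.

Lemma nthcat_eq f fuel n N : (forall i, 0 < size (f i)) -> n < fuel ->
  n < size (flatten (mkseq f N)) -> nthcat f fuel n = nth l1 (flatten (mkseq f N)) n.
Proof.
elim: fuel f n N => [//|fuel IH] f n [|N] Hf Hn HN //.
rewrite mkseqSl in HN *.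
have E : forall a l, flatten (a :: l) = a ++ flatten l by [].
rewrite E in HN *. rewrite nth_cat [nthcat _ _ _]/=.
case: ifP => // Hlt. rewrite size_cat in HN.
have H0 := Hf 0.
apply: (IH (fun i => f i.+1)) => //; lia.
Qed.

Definition posw (x : config) N := mkseq (fun j => x (Posz j)) N.
Definition negw (x : config) N := mkseq (fun j => x (Posz j - Posz N)%R) N.

Lemma rev_negw x N : rev (negw x N) = mkseq (fun i => x (- Posz i.+1)%R) N.
Proof.
elim: N => [//|N IH]. rewrite /negw mkseqSl rev_cons.
have -> : mkseq (fun i => x (Posz i.+1 - Posz N.+1)%R) N = negw x N.
  by apply: eq_mkseq => i /=; congr x; lia.
by rewrite IH mkseqS; congr rcons; congr x; lia.
Qed.

Lemma morphw_mkseq s h N : morphw s (mkseq h N) = flatten (mkseq (fun i => morph s (h i)) N).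
Proof. by rewrite /morphw /mkseq -map_comp. Qed.

Lemma size_morphw s w : size w <= size (morphw s w).
Proof.
elim: w => //= a w IH. rewrite /morphw /= size_cat -/(morphw s w).
have := size_morph s a. lia.
Qed.

Lemma morphw_cat s w1 w2 : morphw s (w1 ++ w2) = morphw s w1 ++ morphw s w2.
Proof. by rewrite /morphw map_cat flatten_cat. Qed.

Lemma window s x N m :
  m < size (morphw s (negw x N) ++ morphw s (posw x N)) ->
  morphx s x (Posz m - Posz (size (morphw s (negw x N))))%R =
  nth l1 (morphw s (negw x N) ++ morphw s (posw x N)) m.
Proof.
set Wn := morphw s (negw x N); set Wp := morphw s (posw x N).
rewrite size_cat nth_cat => Hm.
case: ifP => Hlt.
- have -> : (Posz m - Posz (size Wn))%R = Negz (size Wn - m.+1) by rewrite NegzE; lia.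
  rewrite /morphx.
  have Hr : flatten (mkseq (fun i => rev (morph s (x (- Posz i.+1)%R))) N) = rev Wn.
    rewrite /Wn /morphw rev_flatten -map_rev -(map_rev (morph s)) rev_negw /mkseq -!map_comp.
    by [].
  rewrite (nthcat_eq (N := N)) ?Hr ?nth_rev ?size_rev; try lia.
  + congr nth; lia.
  + by move=> i; rewrite size_rev size_morph.
- have -> : (Posz m - Posz (size Wn))%R = Posz (m - size Wn) by lia.
  have EWp : Wp = flatten (mkseq (fun i => morph s (x (Posz i))) N) by rewrite /Wp /posw morphw_mkseq.
  rewrite /morphx (nthcat_eq (N := N)) -?EWp //.
  + by move=> i; apply: size_morph.
  + lia.
Qed.

Lemma nth_cat3 (L u R : word) t : t < size u -> nth l1 (L ++ u ++ R) (size L + t) = nth l1 u t.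
Proof. by move=> Ht; rewrite nth_cat ltnNge leq_addr /= addKn nth_cat Ht. Qed.

Lemma lang_cat (Z : subshift) L u R : lang Z (L ++ u ++ R) -> lang Z u.
Proof.
move=> [x [Zx [i Hi]]]; exists x; split => //; exists (i + Posz (size L))%R => k Hk.
have := Hi (size L + k). rewrite nth_cat3 // !size_cat => ->; last lia. congr x; lia.
Qed.

Lemma lang_infix (Z : subshift) u w : infix u w -> lang Z w -> lang Z u.
Proof. by move=> /infixP [L [R ->]]; apply: lang_cat. Qed.

Lemma lang_extL (Z : subshift) w : lang Z w -> exists a, lang Z (a :: w).
Proof.
move=> [x [Zx [i Hi]]]; exists (x (i - 1)%R), x; split => //; exists (i - 1)%R => [[|k]] /= Hk.
  by congr x; lia.
rewrite Hi //; congr x; lia.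
Qed.

Lemma lang_extR (Z : subshift) w : lang Z w -> exists b, lang Z (rcons w b).
Proof.
move=> [x [Zx [i Hi]]]; exists (x (i + Posz (size w))%R), x; split => //; exists i => k.
rewrite size_rcons nth_rcons ltnS leq_eqVlt; case/orP => [/eqP ->|Hk]; first by rewrite ltnn eqxx.
by rewrite Hk Hi.
Qed.

Lemma lang_consl (Z : subshift) a w : lang Z (a :: w) -> lang Z w.
Proof. by move=> H; apply: (@lang_cat Z [:: a] w [::]); rewrite cats0. Qed.

Lemma lang_rconsl (Z : subshift) b w : lang Z (rcons w b) -> lang Z w.
Proof. by move=> H; apply: (@lang_cat Z [::] w [:: b]); rewrite /= cats1. Qed.

Lemma nth_win x N t : t < N + N -> nth l1 (negw x N ++ posw x N) t = x (Posz t - Posz N)%R.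
Proof.
move=> Ht; rewrite nth_cat /negw /posw size_mkseq; case: ifP => H.
  by rewrite nth_mkseq.
rewrite nth_mkseq; [congr x; lia | lia].
Qed.

Lemma lang_win (X : subshift) x N : X x -> lang X (negw x N ++ posw x N).
Proof.
move=> Xx; exists x; split => //; exists (- Posz N)%R => k.
rewrite size_cat /negw /posw !size_mkseq => Hk.
rewrite (nth_win x Hk); congr x; lia.
Qed.

Lemma langY_inv s X u : lang (morph_image s X) u ->
  exists v, lang X v /\ infix u (morphw s v).
Proof.
move=> [y [[x [Xx [k [_ Hy]]]] [i Hocc]]].
remember (i + Posz k)%R as p eqn:Ep.
remember (`|p|%N + size u)%N as N eqn:EN.
exists (negw x N ++ posw x N); split; first exact: lang_win.
rewrite morphw_cat.
have HWn : N <= size (morphw s (negw x N)) by have := size_morphw s (negw x N); rewrite /negw size_mkseq.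
have HWp : N <= size (morphw s (posw x N)) by have := size_morphw s (posw x N); rewrite /posw size_mkseq.
have Hw := @window s x N.
move: HWn HWp Hw.
remember (morphw s (negw x N)) as Wn eqn:EWn; remember (morphw s (posw x N)) as Wp eqn:EWp.
move=> HWn HWp Hw.
remember (absz (p + Posz (size Wn))%R) as off eqn:Eoff.
have Hoff : Posz off = (p + Posz (size Wn))%R by lia.
suff -> : u = take (size u) (drop off (Wn ++ Wp)).
  by apply: (infix_trans (infix_take _ _)); apply: infix_drop.
apply: (@eq_from_nth _ l1).
  rewrite size_take size_drop size_cat; case: ifP => //; lia.
move=> t Ht; rewrite nth_take // nth_drop -Hw; last first.
  rewrite size_cat; lia.
rewrite Hocc // Hy /shiftn; congr morphx; lia.
Qed.

Lemma langY_morphw s X v : lang X v -> lang (morph_image s X) (morphw s v).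
Proof.
move=> [x [Xx [i Hi]]].
set N := (`|i|%N + size v)%N.
set off := absz (i + Posz N)%R.
set Wx := negw x N ++ posw x N.
have HWx : size Wx = N + N by rewrite size_cat /negw /posw !size_mkseq.
have Ev : v = take (size v) (drop off Wx).
  apply: (@eq_from_nth _ l1).
    rewrite size_take size_drop HWx; case: ifP => //; lia.
  move=> t Ht; rewrite nth_take // nth_drop nth_win; last lia.
  rewrite Hi //; congr x; lia.
have EW : Wx = take off Wx ++ take (size v) (drop off Wx) ++ drop (size v) (drop off Wx).
  by rewrite !cat_take_drop.
rewrite -Ev in EW.
set L := take off Wx; set R := drop (size v) (drop off Wx).
set Wn := morphw s (negw x N).
exists (morphx s x); split.
  exists x; split => //; exists 0; split; first exact: size_morph.
  by move=> n; rewrite /shiftn GRing.addr0.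
exists (Posz (size (morphw s L)) - Posz (size Wn))%R => t Ht.
have Hw := @window s x N (size (morphw s L) + t).
rewrite -morphw_cat -/Wx EW !morphw_cat nth_cat3 // !size_cat in Hw.
rewrite /L /Wn in Hw *. rewrite -Hw; last lia. congr morphx; lia.
Qed.

Lemma langY_infix s X u v : lang X v -> infix u (morphw s v) -> lang (morph_image s X) u.
Proof. by move=> Hv Hi; apply: (lang_infix Hi); apply: langY_morphw. Qed.

Lemma morph_head s a : exists tl, morph s a = l1 :: tl /\ l1 \notin tl.
Proof.
case: s => [||||k|k]; rewrite /morph; case: ifP => _; try case: ifP => _;
  eexists; split; try reflexivity; rewrite ?inE ?mem_nseq //; by case: k.
Qed.

Lemma cat_split (A B u R : word) : A ++ B = u ++ R ->
  (size u <= size A -> A = u ++ drop (size u) A) /\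
  (size A <= size u -> u = A ++ drop (size A) u /\ B = drop (size A) u ++ R).
Proof.
elim: A u => [|a A IH] u /= E.
  split; first by case: u E.
  by move=> _; rewrite drop0.
case: u E => [|c u] /= E.
  by split.
case: E => -> /IH [H1 H2]; split; first by move/H1 => <-.
by move/H2 => [<- ->].
Qed.

Lemma morphw_cons s c v : morphw s (c :: v) = morph s c ++ morphw s v.
Proof. by []. Qed.

Lemma dec2 s v u R : morphw s v = u ++ R -> u != [::] ->
  exists v' b v2 pf t', [/\ v = v' ++ b :: v2, morph s b = pf ++ t', pf != [::]
     & u = morphw s v' ++ pf].
Proof.
elim: v u => [|c v0 IH] u /=.
  by case: u.
rewrite morphw_cons => /cat_split [H1 H2] Hu.
case: (leqP (size u) (size (morph s c))) => Hle.
  exists [::], c, v0, u, (drop (size u) (morph s c)); split => //.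
  exact: H1.
have [Eu Ev0] := H2 (ltnW Hle).
have Hne : drop (size (morph s c)) u != [::].
  by rewrite -size_eq0 size_drop subn_eq0 -ltnNge.
have [v' [b [v2 [pf [t' [-> Hb Hpf Eu2]]]]]] := IH _ Ev0 Hne.
exists (c :: v'), b, v2, pf, t'; split => //.
by rewrite Eu Eu2 morphw_cons catA.
Qed.

Lemma dec s v L u R : morphw s v = L ++ u ++ R -> l1 \in u -> 0 < size L ->
  exists v1 a v' b v2 sf t pf t',
    [/\ v = v1 ++ a :: v' ++ b :: v2, morph s a = t ++ sf /\ t != [::],
        morph s b = pf ++ t' /\ pf != [::] & u = sf ++ morphw s v' ++ pf].
Proof.
have Hune : l1 \in u -> u != [::] by case: u.
elim: v L => [|c v0 IH] L /=.
  by case: L.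
rewrite morphw_cons => E Hin HL; have [H1 H2] := cat_split E.
case: (leqP (size (morph s c)) (size L)) => Hle.
  have [EL Ev0] := H2 Hle.
  case EL2: (drop (size (morph s c)) L) => [|l L2].
    rewrite EL2 /= in Ev0.
    have [v' [b [v2 [pf [t' [-> Hb Hpf Eu]]]]]] := dec2 Ev0 (Hune Hin).
    exists [::], c, v', b, v2, [::], (morph s c), pf, t'; split => //.
    by rewrite cats0; have [tl [-> _]] := morph_head s c.
  rewrite EL2 in Ev0.
  have [v1 [a [v' [b [v2 [sf [t [pf [t' [-> Ha Hb Eu]]]]]]]]]] := IH _ Ev0 Hin isT.
  by exists (c :: v1), a, v', b, v2, sf, t, pf, t'.
have HmL := H1 (ltnW Hle).
set D := drop (size L) (morph s c) in HmL.
have HD : D ++ morphw s v0 = u ++ R.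
  have := f_equal (drop (size L)) E.
  by rewrite {1}HmL -catA !drop_size_cat.
have [H3 H4] := cat_split HD.
case: (leqP (size u) (size D)) => Hle2.
  have Hu := H3 Hle2.
  have : l1 \in D by rewrite Hu mem_cat Hin.
  have [tl [Etl Hn]] := morph_head s c.
  rewrite /D Etl; case: (size L) HL => // n _ /=.
  by move/mem_drop; rewrite (negbTE Hn).
have [Eu Ev0] := H4 (ltnW Hle2).
have Hne : drop (size D) u != [::].
  by rewrite -size_eq0 size_drop subn_eq0 -ltnNge.
have [v' [b [v2 [pf [t' [-> Hb Hpf Eu2]]]]]] := dec2 Ev0 Hne.
exists [::], c, v', b, v2, D, L, pf, t'; split => //.
- by split => //; rewrite -size_eq0 -lt0n.
- by rewrite Eu Eu2.
Qed.

Lemma ext_of_lang s X u : lang (morph_image s X) u -> l1 \in u ->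
  exists v, lang X v /\ ext_image s X u v.
Proof.
move=> Hu Hin.
have [v [Hv /infixP [L' [R E]]]] := langY_inv Hu.
have [a0 Ha0] := lang_extL Hv.
have E2 : morphw s (a0 :: v) = (morph s a0 ++ L') ++ u ++ R by rewrite morphw_cons E -catA.
have HL : 0 < size (morph s a0 ++ L') by rewrite size_cat; have := size_morph s a0; lia.
have [v1 [a [v' [b [v2 [sf [t [pf [t' [Ev [Ha Ht] [Hb Hpf] Eu]]]]]]]]]] := dec E2 Hin HL.
have Hl : lang X (a :: rcons v' b).
  apply: (@lang_cat X v1 _ v2); move: Ha0; rewrite Ev; congr lang.
  by rewrite /= -cats1 -catA.
exists v'; split.
  by apply: (@lang_cat X [:: a] v' [:: b]); rewrite /= cats1.
split => //.
- by case: (u) Hin.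
- exists a, b, sf, pf; split => //.
  + by exists t.
  + by split => //; exists t'.
Qed.

Lemma ext_edge_sym Z w u v : ext_edge Z w u v -> ext_edge Z w v u.
Proof. by case: u => a; case: v => b. Qed.

Lemma ext_edge_vtx Z w u v : ext_edge Z w u v -> is_vertex Z w u /\ is_vertex Z w v.
Proof.
have H : forall a b, lang Z (a :: rcons w b) -> lang Z (a :: w) /\ lang Z (rcons w b).
  move=> a b H; split; first exact: (@lang_rconsl Z b (a :: w) H).
  exact: lang_consl H.
by case: u => a; case: v => b //= /H [].
Qed.

Lemma vtx_edge Z w u : is_vertex Z w u -> exists v, ext_edge Z w u v.
Proof.
case: u => a /=.
  by move=> /lang_extR [b Hb]; exists (inr b); rewrite /= -rcons_cons.
by move=> /lang_extL [b Hb]; exists (inl b).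
Qed.

Lemma ppath_cat (T : Type) (e : T -> T -> Prop) x p q :
  ppath e x (p ++ q) <-> ppath e x p /\ ppath e (last x p) q.
Proof.
elim: p x => [|y p IH] x /=; first by split => // [[]].
rewrite IH; split; [by move=> [? []] | by move=> [[]]].
Qed.

Lemma ppath_nth (T : Type) (e : T -> T -> Prop) z x p :
  ppath e x p -> forall i, i < size p -> e (nth z (x :: p) i) (nth z (x :: p) i.+1).
Proof.
elim: p x => [//|y p IH] x /= [Hxy Hp] [|i] Hi //=.
exact: (IH y Hp i).
Qed.

Lemma exists_max (d : vtx -> nat) (c : seq vtx) : c != [::] ->
  exists2 y, y \in c & forall z, z \in c -> d z <= d y.
Proof.
elim: c => [//|a c IH] _.
case: (c =P [::]) => [->|/eqP Hc].
  by exists a; rewrite ?inE // => z; rewrite inE => /eqP ->.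
have [y Hy Hm] := IH Hc.
case: (leqP (d a) (d y)) => H.
  exists y; first by rewrite inE Hy orbT.
  by move=> z; rewrite inE => /orP [/eqP ->|/Hm].
exists a; first by rewrite inE eqxx.
move=> z; rewrite inE => /orP [/eqP ->//|/Hm]; lia.
Qed.

Lemma acyclic_depth (V : vtx -> Prop) (e : vtx -> vtx -> Prop) (d : vtx -> nat) :
  (forall u v, e u v -> e v u) ->
  (forall u v, e u v -> d u <> d v) ->
  (forall u v1 v2, e u v1 -> e u v2 -> d v1 < d u -> d v2 < d u -> v1 = v2) ->
  graph_acyclic V e.
Proof.
move=> Hs Hd Hp [x [p [_ _ Hu Hsz Hpp]]].
set c := x :: p in Hu Hsz.
set n := size c.
have Hw := ppath_nth x Hpp; rewrite size_rcons in Hw.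
have Ew : forall j, j < n -> nth x (x :: rcons p x) j = nth x c j.
  by move=> j Hj; rewrite -rcons_cons nth_rcons Hj.
have Ewn : nth x (x :: rcons p x) n = nth x c 0.
  by rewrite -rcons_cons nth_rcons ltnn eqxx.
have [y Hy Hm] := exists_max d (isT : c != [::]).
have [i Hi Eyi] : exists2 i, i < n & nth x c i = y.
  by exists (index y c); rewrite ?index_mem ?nth_index.
have En : n = (size p).+1 by [].
have Enc : n = size c by [].
clearbody n c.
have Hnx : (if i.+1 < n then i.+1 else 0) < n by case: ifP => //; lia.
have Hpv : (if i is j.+1 then j else n.-1) < n by case: (i) Hi => [|j] /=; lia.
move: Hnx Hpv.
set nx := if i.+1 < n then i.+1 else 0.
set pv := if i is j.+1 then j else n.-1.
move=> Hnx Hpv.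
have E1 : e y (nth x c nx).
  have := Hw i ltac:(lia); rewrite Ew // Eyi /nx; case: ifP => H.
    by rewrite Ew.
  have Ein : i.+1 = n by lia.
  by rewrite Ein Ewn.
have E2 : e y (nth x c pv).
  apply: Hs; rewrite /pv; move: Eyi Hi; case: (i) => [|j] Eyi Hi.
    have := Hw n.-1 ltac:(lia).
    by rewrite Ew ?prednK // ?Ewn -?Eyi //; lia.
  have H := Hw j ltac:(lia).
  rewrite (Ew j) in H; last lia.
  rewrite (Ew j.+1) in H; last lia.
  by rewrite Eyi in H.
have Lt : forall z, e y z -> z \in c -> d z < d y.
  by move=> z Hz /Hm Hle; have := Hd _ _ Hz; lia.
have Hnx' : nx < size c by rewrite -Enc.
have Hpv' : pv < size c by rewrite -Enc.
have := Hp _ _ _ E1 E2 (Lt _ E1 (mem_nth x Hnx')) (Lt _ E2 (mem_nth x Hpv')).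
move/eqP; rewrite nth_uniq -?Enc // /nx /pv; move: Hi; case: (i) => [|j] Hi; case: ifP => H; lia.
Qed.

Lemma connected_center (V : vtx -> Prop) (e : vtx -> vtx -> Prop) r :
  (forall u v, e u v -> e v u) -> V r ->
  (forall v, V v -> v = r \/ e r v) -> graph_connected V e.
Proof.
move=> Hs Hr Hc u v Hu Hv.
have [pu [Hpu Lu]] : exists pu, ppath e u pu /\ last u pu = r.
  case: (Hc u Hu) => [->|H]; first by exists [::].
  by exists [:: r]; split => //=; split => //; apply: Hs.
have [pv [Hpv Lv]] : exists pv, ppath e r pv /\ last r pv = v.
  case: (Hc v Hv) => [->|H]; first by exists [::].
  by exists [:: v].
exists (pu ++ pv); rewrite last_cat Lu; split => //.
by apply/ppath_cat; rewrite Lu.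
Qed.

Lemma star_left Z w : lang Z w ->
  (forall a a', lang Z (a :: w) -> lang Z (a' :: w) -> a = a') -> dendric_word Z w.
Proof.
move=> Hw Hu; have [a0 Ha0] := lang_extL Hw.
split.
- apply: (@connected_center _ _ (inl a0)) => //; first exact: ext_edge_sym.
  case=> [a|b] /= Hv; first by left; congr inl; apply: Hu.
  right; have [[a|b'] He] := @vtx_edge Z w (inr b) Hv => //.
  have [_ Ha] := ext_edge_vtx He.
  by rewrite -(Hu _ _ Ha0 Ha) in He; exact: (@ext_edge_sym Z w (inr b) (inl a0) He).
- apply: (@acyclic_depth _ _ (fun v => if v is inl _ then 0 else 1)).
  + exact: ext_edge_sym.
  + by case=> a; case=> b.
  + case=> [a|b] [a1|b1] [a2|b2] //= H1 H2 _ _.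
    have [_ Ha1] := @ext_edge_vtx Z w (inr b) (inl a1) H1.
    have [_ Ha2] := @ext_edge_vtx Z w (inr b) (inl a2) H2.
    by rewrite (Hu _ _ Ha1 Ha2).
Qed.

Lemma star_right Z w : lang Z w ->
  (forall b b', lang Z (rcons w b) -> lang Z (rcons w b') -> b = b') -> dendric_word Z w.
Proof.
move=> Hw Hu; have [b0 Hb0] := lang_extR Hw.
split.
- apply: (@connected_center _ _ (inr b0)) => //; first exact: ext_edge_sym.
  case=> [a|b] /= Hv; last by left; congr inr; apply: Hu.
  right; have [[a'|b'] He] := @vtx_edge Z w (inl a) Hv => //.
  have [_ Hb] := ext_edge_vtx He.
  by rewrite -(Hu _ _ Hb0 Hb) in He; exact: (@ext_edge_sym Z w (inl a) (inr b0) He).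
- apply: (@acyclic_depth _ _ (fun v => if v is inr _ then 0 else 1)).
  + exact: ext_edge_sym.
  + by case=> a; case=> b.
  + case=> [a|b] [a1|b1] [a2|b2] //= H1 H2 _ _.
    have [_ Hb1] := @ext_edge_vtx Z w (inl a) (inr b1) H1.
    have [_ Hb2] := @ext_edge_vtx Z w (inl a) (inr b2) H2.
    by rewrite (Hu _ _ Hb1 Hb2).
Qed.

Lemma nonbisp_dendric Z w : lang Z w -> ~ bispecial Z w -> dendric_word Z w.
Proof.
move=> Hw Hnb.
case: (Classical_Prop.classic (exists a a' : letter, a != a' /\ lang Z (a :: w) /\ lang Z (a' :: w))) => HL.
  apply: star_right => // b b' Hb Hb'.
  case: (eqVneq b b') => // Hne; exfalso; apply: Hnb; split => //.
  by exists b, b'.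
apply: star_left => // a a' Ha Ha'.
case: (eqVneq a a') => // Hne; exfalso; apply: HL.
by exists a, a'.
Qed.

Lemma path_ppath Z w (A : rel vtx) u p :
  (forall u v, ext_edge Z w u v <-> A u v) -> path A u p -> ppath (ext_edge Z w) u p.
Proof.
move=> HA; elim: p u => [//|y p IH] u /= /andP [H1 H2]; split; first exact/HA.
exact: IH.
Qed.

Lemma tree_bool Z w (A : rel vtx) (d : vtx -> nat) :
  (forall u v, ext_edge Z w u v <-> A u v) ->
  [forall u, forall v, A u v ==> (d u != d v)] ->
  [forall u, forall v1, forall v2, [&& A u v1, A u v2, d v1 < d u & d v2 < d u] ==> (v1 == v2)] ->
  [forall u, forall v, [exists x, A u x] ==> [exists x, A v x] ==> connect A u v] ->
  dendric_word Z w.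
Proof.
move=> HA Hd Hp Hc; split.
- move=> u v Hu Hv.
  have [x Hx] := vtx_edge Hu; have [y Hy] := vtx_edge Hv.
  have := forallP (forallP Hc u) v.
  rewrite (introT existsP (ex_intro _ x (iffLR (HA _ _) Hx))) (introT existsP (ex_intro _ y (iffLR (HA _ _) Hy))) /=.
  move=> /connectP [p Hp1 ->]; exists p; split => //.
  exact: path_ppath HA Hp1.
- apply: (@acyclic_depth _ _ d); first exact: ext_edge_sym.
  + move=> u v /HA H; have := forallP (forallP Hd u) v; rewrite H /=; by move/eqP.
  + move=> u v1 v2 /HA H1 /HA H2 L1 L2.
    have := forallP (forallP (forallP Hp u) v1) v2.
    by rewrite H1 H2 L1 L2 /= => /eqP.
Qed.

Lemma infix_cat_split (A B u : word) : infix u (A ++ B) ->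
  [\/ infix u A, infix u B |
     exists k, [/\ 0 < k < size u, suffix (take k u) A & prefix (drop k u) B]].
Proof.
move=> /infixP [L [R E]].
have [H1 H2] := cat_split E.
case: (leqP (size A) (size L)) => Hle.
  have [_ EB] := H2 Hle.
  by constructor 2; apply/infixP; exists (drop (size A) L), R; rewrite EB catA.
have HmL := H1 (ltnW Hle).
set D := drop (size L) A in HmL.
have HD : D ++ B = u ++ R.
  have := f_equal (drop (size L)) E.
  by rewrite {1}HmL -catA !drop_size_cat.
have [H3 H4] := cat_split HD.
case: (leqP (size u) (size D)) => Hle2.
  constructor 1; apply/infixP; exists L, (drop (size u) D).
  by rewrite {1}HmL {1}(H3 Hle2) catA.
have [Eu EB] := H4 (ltnW Hle2).
constructor 3; exists (size D); split.
- by rewrite Hle2 andbT /D size_drop subn_gt0.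
- by rewrite {1}Eu take_size_cat //; apply/suffixP; exists L.
- by rewrite EB; apply/prefixP; exists R.
Qed.

Lemma blk s v w a b : l1 \notin w -> infix (a :: rcons w b) (morphw s v) ->
  exists c, infix (a :: rcons w b) (rcons (morph s c) l1).
Proof.
move=> Hw; elim: v => [|c v0 IH] /=.
  by case: w Hw.
rewrite morphw_cons => /infix_cat_split [H|H|[k [/andP [Hk0 Hk] Hs Hp]]].
- by exists c; apply: (infix_trans H); apply: infix_rcons.
- exact: IH.
- exists c.
  case: v0 Hp {IH} => [|c' v1] Hp.
    have : 0 < size (drop k (a :: rcons w b)) by rewrite size_drop subn_gt0.
    by move: Hp; rewrite /morphw /=; case: (drop k _).
  have [tl [Etl _]] := morph_head s c'.
  rewrite morphw_cons Etl in Hp.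
  have Hn : nth l1 (a :: rcons w b) k = l1.
    have -> : nth l1 (a :: rcons w b) k = nth l1 (drop k (a :: rcons w b)) 0 by rewrite nth_drop addn0.
    by move: Hp; case: (drop k _) => //= y l /andP [/eqP -> _].
  clear Hp; move: Hk0 Hk Hn Hs; case: k => // k _; rewrite /= size_rcons ltnS nth_rcons => Hk.
  case: ifP => Hkw.
    by move=> Hn; move: Hw; rewrite -Hn mem_nth.
  have Ek : k = size w by apply/eqP; rewrite eqn_leq -ltnS Hk leqNgt Hkw.
  rewrite Ek eqxx => -> /suffixP [P EP].
  rewrite -cats1 take_size_cat // in EP.
  by apply/infixP; exists P, [::]; rewrite EP -!cats1 cats0 -catA.
Qed.

Lemma l31 : (l3 == l1) = false. Proof. by []. Qed.
Lemma l13 : (l1 == l3) = false. Proof. by []. Qed.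

Definition Pb3 j m b := ((j < m) && (b == l3)) || ((j == m) && (b == l1)).
Definition Ib3 a j b m := (a == l3) && (((j.+2 <= m) && (b == l3)) || ((j.+1 <= m) && (b == l1))).

Lemma pre3 j m b : prefix (nseq j l3 ++ [:: b]) (nseq m l3 ++ [:: l1]) =
  ((j < m) && (b == l3)) || ((j == m) && (b == l1)).
Proof.
elim: j m => [|j IH] [|m] /=.
- by rewrite andbT.
- by case: (prefix _ _) (prefix0s (nseq m l3 ++ [:: l1])) => // _; rewrite andbT orbF.
- by [].
- by rewrite IH.
Qed.

Lemma inf3 a j b m : infix (a :: nseq j l3 ++ [:: b]) (nseq m l3 ++ [:: l1]) =
  (a == l3) && (((j.+2 <= m) && (b == l3)) || ((j.+1 <= m) && (b == l1))).
Proof.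
elim: m => [|m IH].
  change (nseq 0 l3 ++ [:: l1]) with [:: l1]; rewrite infixs1.
  by case: j => [|j]; rewrite /= ?eqseq_cons ?andbF.
change (nseq m.+1 l3 ++ [:: l1]) with (l3 :: (nseq m l3 ++ [:: l1])).
rewrite infix_consl -/(prefix (a :: (nseq j l3 ++ [:: b])) (l3 :: (nseq m l3 ++ [:: l1]))).
rewrite IH /= pre3.
case: (a == l3) => //=.
case: (b == l3); case: (b == l1); lia.
Qed.

Lemma letter_cases (c : letter) : [\/ c = l1, c = l2 | c = l3].
Proof.
case: c => [[|[|[|n]]] H]; [constructor 1|constructor 2|constructor 3|by []];
  exact: val_inj.
Qed.

Lemma ex3 (P : pred letter) : [exists c, P c] = [|| P l1, P l2 | P l3].
Proof.
apply/existsP/idP => [[c]|].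
  by case: (letter_cases c) => ->  ->; rewrite ?orbT.
by case/or3P => H; eexists; exact: H.
Qed.

Definition Eb s w a b := [exists c, infix (a :: rcons w b) (rcons (morph s c) l1)].

Lemma pre_l2 j b m : prefix (nseq j l3 ++ [:: b]) (l2 :: (nseq m l3 ++ [:: l1])) = (j == 0) && (b == l2).
Proof. by case: j => [|j] /=; rewrite ?prefix0s ?andbT. Qed.

Lemma inf_l2 a j b m : infix (a :: nseq j l3 ++ [:: b]) (l2 :: (nseq m l3 ++ [:: l1])) =
  (a == l2) && Pb3 j m b || Ib3 a j b m.
Proof. by rewrite infix_consl inf3 /= pre3. Qed.

Lemma inf_12 a j b m : infix (a :: nseq j l3 ++ [:: b]) (l1 :: l2 :: (nseq m l3 ++ [:: l1])) =
  (a == l1) && (j == 0) && (b == l2) || ((a == l2) && Pb3 j m b || Ib3 a j b m).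
Proof. by rewrite infix_consl prefix_cons inf_l2 pre_l2 andbA. Qed.

Lemma inf_1 a j b m : infix (a :: nseq j l3 ++ [:: b]) (l1 :: (nseq m l3 ++ [:: l1])) =
  (a == l1) && Pb3 j m b || Ib3 a j b m.
Proof. by rewrite infix_consl inf3 /= pre3. Qed.

Lemma infix_size (s1 s2 : word) : infix s1 s2 -> size s1 <= size s2.
Proof. by move=> /infixP [L [R ->]]; rewrite !size_cat; lia. Qed.

Lemma inf_11 a j b : infix (a :: nseq j l3 ++ [:: b]) [:: l1; l1] = (a == l1) && (j == 0) && (b == l1).
Proof.
case: j => [|j].
  by case: (letter_cases a) => ->; case: (letter_cases b) => ->.
rewrite andbF; apply/negbTE/negP => H; have := infix_size H; rewrite /= size_cat size_nseq /=; lia.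
Qed.

Lemma inf_121 a j b : infix (a :: nseq j l3 ++ [:: b]) [:: l1; l2; l1] =
  (j == 0) && ((a == l1) && (b == l2) || (a == l2) && (b == l1)).
Proof.
case: j => [|[|j]].
- by case: (letter_cases a) => ->; case: (letter_cases b) => ->.
- by case: (letter_cases a) => ->; case: (letter_cases b) => ->.
transitivity false; last by []. apply/negbTE/negP => H; have := infix_size H; rewrite /= size_cat size_nseq /=; lia.
Qed.

Lemma Eb_delta k j a b : Eb (Delta k) (nseq j l3) a b =
  [|| (a == l1) && (j == 0) && (b == l1),
      (a == l1) && (j == 0) && (b == l2) || ((a == l2) && Pb3 j k b || Ib3 a j b k)
    | (a == l1) && (j == 0) && (b == l2) || ((a == l2) && Pb3 j k.+1 b || Ib3 a j b k.+1)].
Proof.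
rewrite /Eb ex3 -cats1.
have -> : rcons (morph (Delta k) l1) l1 = [:: l1; l1] by [].
have -> : rcons (morph (Delta k) l2) l1 = l1 :: l2 :: (nseq k l3 ++ [:: l1]) by rewrite /= cats1.
have -> : rcons (morph (Delta k) l3) l1 = l1 :: l2 :: (nseq k.+1 l3 ++ [:: l1]) by rewrite /= cats1.
by rewrite inf_11 !inf_12.
Qed.

Lemma Eb_zeta k j a b : Eb (Zeta k) (nseq j l3) a b =
  [|| (a == l1) && Pb3 j k b || Ib3 a j b k,
      (j == 0) && ((a == l1) && (b == l2) || (a == l2) && (b == l1))
    | (a == l1) && Pb3 j k.+1 b || Ib3 a j b k.+1].
Proof.
rewrite /Eb ex3 -cats1.
have -> : rcons (morph (Zeta k) l1) l1 = l1 :: (nseq k l3 ++ [:: l1]) by rewrite /= cats1.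
have -> : rcons (morph (Zeta k) l2) l1 = [:: l1; l2; l1] by [].
have -> : rcons (morph (Zeta k) l3) l1 = l1 :: (nseq k.+1 l3 ++ [:: l1]) by rewrite /= cats1.
by rewrite inf_121 !inf_1.
Qed.

Definition relT (T : letter -> letter -> bool) : rel vtx := fun u v =>
  match u, v with inl a, inr b => T a b | inr b, inl a => T a b | _, _ => false end.

Lemma edge_free s X w a b : (forall c, lang X [:: c]) -> l1 \notin w ->
  lang (morph_image s X) (a :: rcons w b) <-> Eb s w a b.
Proof.
move=> HX Hw; split.
  move=> /langY_inv [v [_ Hv]]; have [c Hc] := blk Hw Hv.
  by apply/existsP; exists c.
move=> /existsP [c Hc].
have [d Hd] := lang_extR (HX c).
apply: (@langY_infix s X _ [:: c; d] Hd).
apply: (infix_trans Hc).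
have [tl [Etl _]] := morph_head s d.
rewrite /morphw /= Etl cats0 -cats1.
by apply/infixP; exists [::], tl; rewrite /= -catA.
Qed.

Lemma relT_ok s X w : (forall c, lang X [:: c]) -> l1 \notin w ->
  forall u v, ext_edge (morph_image s X) w u v <-> relT (Eb s w) u v.
Proof.
move=> HX Hw [a|b] [a'|b'] //=; exact: edge_free.
Qed.

Lemma relT_eq (T1 T2 : letter -> letter -> bool) (P : vtx -> vtx -> Prop) :
  (forall a b, T1 a b = T2 a b) -> (forall u v, P u v <-> relT T1 u v) ->
  forall u v, P u v <-> relT T2 u v.
Proof. by move=> E H u v; rewrite H; case: u => ?; case: v => ? //=; rewrite E. Qed.

Definition vlist : seq vtx := [:: inl l1; inl l2; inl l3; inr l1; inr l2; inr l3].
Lemma in_vlist v : v \in vlist.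
Proof. by case: v => a; case: (letter_cases a) => ->. Qed.
Definition allv (P : vtx -> bool) := all P vlist.
Lemma allvP P : allv P -> forall v, P v.
Proof. by move=> /allP H v; apply: H; apply: in_vlist. Qed.

Definition step (A : rel vtx) (S : seq vtx) := undup (S ++ [seq v <- vlist | has (fun u => A u v) S]).
Definition reach A x := iter 6 (step A) [:: x].

Lemma reach_path A x y : y \in reach A x -> exists p, path A x p /\ last x p = y.
Proof.
rewrite /reach; elim: 6 y => [|n IH] y /=.
  by rewrite inE => /eqP ->; exists [::].
rewrite /step mem_undup mem_cat => /orP [/IH //|].
rewrite mem_filter => /andP [/hasP [u Hu Auy] _].
have [p [Hp Lp]] := IH u Hu.
exists (rcons p y); split; last by rewrite last_rcons.
by rewrite rcons_path Hp Lp.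
Qed.

Lemma tree_bool2 Z w (A : rel vtx) (d : vtx -> nat) :
  (forall u v, ext_edge Z w u v <-> A u v) ->
  allv (fun u => allv (fun v => A u v ==> (d u != d v))) ->
  allv (fun u => allv (fun v1 => allv (fun v2 =>
     [&& A u v1, A u v2, d v1 < d u & d v2 < d u] ==> (v1 == v2)))) ->
  allv (fun u => allv (fun v => has (A u) vlist ==> has (A v) vlist ==> (v \in reach A u))) ->
  dendric_word Z w.
Proof.
move=> HA Hd Hp Hc; split.
- move=> u v Hu Hv.
  have [x Hx] := vtx_edge Hu; have [y Hy] := vtx_edge Hv.
  have := allvP (allvP Hc u) v.
  have -> : has (A u) vlist by apply/hasP; exists x; [exact: in_vlist| exact/HA].
  have -> : has (A v) vlist by apply/hasP; exists y; [exact: in_vlist| exact/HA].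
  move=> /= /reach_path [p [Hp1 <-]]; exists p; split => //.
  exact: path_ppath HA Hp1.
- apply: (@acyclic_depth _ _ d); first exact: ext_edge_sym.
  + move=> u v /HA H; have := allvP (allvP Hd u) v; rewrite H /=; by move/eqP.
  + move=> u v1 v2 /HA H1 /HA H2 L1 L2.
    have := allvP (allvP (allvP Hp u) v1) v2.
    by rewrite H1 H2 L1 L2 /= => /eqP.
Qed.

Definition Ebl s w a b := [|| infix (a :: rcons w b) (rcons (morph s l1) l1),
  infix (a :: rcons w b) (rcons (morph s l2) l1) | infix (a :: rcons w b) (rcons (morph s l3) l1)].
Lemma Eb_Ebl s w a b : Eb s w a b = Ebl s w a b.
Proof. by rewrite /Eb ex3. Qed.

Definition dT (l r : seq nat) (v : vtx) := match v with inl a => nth 0 l a | inr b => nth 0 r b end.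

Definition pr (a b : letter) (x y : letter) := (a == x) && (b == y).

Lemma letter_ind2 (P : letter -> letter -> Prop) :
  P l1 l1 -> P l1 l2 -> P l1 l3 -> P l2 l1 -> P l2 l2 -> P l2 l3 -> P l3 l1 -> P l3 l2 -> P l3 l3 ->
  forall a b, P a b.
Proof.
move=> H11 H12 H13 H21 H22 H23 H31 H32 H33 a b.
by case: (letter_cases a) => ->; case: (letter_cases b) => ->.
Qed.

Lemma l12 : (l1 == l2) = false. Proof. by []. Qed.
Lemma l21 : (l2 == l1) = false. Proof. by []. Qed.
Lemma l23 : (l2 == l3) = false. Proof. by []. Qed.
Lemma l32 : (l3 == l2) = false. Proof. by []. Qed.

Ltac tab_tac := apply: letter_ind2; rewrite /Pb3 /Ib3 /pr /= ?eqxx ?l12 ?l13 ?l21 ?l23 ?l31 ?l32 /=; lia.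

Definition chk1 (A : rel vtx) (d : vtx -> nat) := allv (fun u => allv (fun v => A u v ==> (d u != d v))).
Definition chk2 (A : rel vtx) (d : vtx -> nat) := allv (fun u => allv (fun v1 => allv (fun v2 =>
     [&& A u v1, A u v2, d v1 < d u & d v2 < d u] ==> (v1 == v2)))).
Definition chk3 (A : rel vtx) := allv (fun u => allv (fun v => has (A u) vlist ==> has (A v) vlist ==> (v \in reach A u))).

Lemma use_table s X w T l r : (forall c, lang X [:: c]) -> l1 \notin w ->
  (forall a b, Eb s w a b = T a b) ->
  chk1 (relT T) (dT l r) -> chk2 (relT T) (dT l r) -> chk3 (relT T) ->
  dendric_word (morph_image s X) w.
Proof.
move=> HX Hw HT H1 H2 H3.
apply: (tree_bool2 (A := relT T) (d := dT l r)) => //.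
exact: relT_eq HT (relT_ok s HX Hw).
Qed.

Definition TD0 a b := [|| pr a b l1 l1, pr a b l1 l2, pr a b l2 l3, pr a b l3 l3 | pr a b l3 l1].
Definition TD1 a b := [|| pr a b l2 l3, pr a b l3 l3 | pr a b l3 l1].
Definition TD2 a b := [|| pr a b l2 l3, pr a b l2 l1 | pr a b l3 l1].
Definition TD3 a b := pr a b l2 l1.
Definition TZ0 a b := [|| pr a b l1 l3, pr a b l1 l2, pr a b l2 l1, pr a b l3 l3 | pr a b l3 l1].
Definition TZ1 a b := [|| pr a b l1 l3, pr a b l3 l3 | pr a b l3 l1].
Definition TZ2 a b := [|| pr a b l1 l3, pr a b l1 l1 | pr a b l3 l1].
Definition TZ3 a b := pr a b l1 l1.
Definition Tnone (a b : letter) := false.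

Lemma free_delta X k j : (forall c, lang X [:: c]) -> 0 < k ->
  dendric_word (morph_image (Delta k) X) (nseq j l3).
Proof.
move=> HX Hk.
have Hw : l1 \notin nseq j l3 by rewrite mem_nseq negb_and l13 orbT.
case: (posnP j) => [->|Hj0].
  by apply: (@use_table _ _ _ TD0 [:: 0;4;2] [:: 1;1;3]) => //;
    [move=> a b; rewrite Eb_delta /TD0; move: a b; tab_tac | vm_compute..].
case: (ltngtP j k) => Hjk.
- by apply: (@use_table _ _ _ TD1 [:: 0;0;2] [:: 3;0;1]) => //;
    [move=> a b; rewrite Eb_delta /TD1; move: a b; tab_tac | vm_compute..].
- case: (ltngtP j k.+1) => Hjk1.
  + lia.
  + by apply: (@use_table _ _ _ Tnone [:: 0;0;2] [:: 1;0;1]) => //;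
      [move=> a b; rewrite Eb_delta /Tnone; move: a b; tab_tac | vm_compute..].
  + subst j; by apply: (@use_table _ _ _ TD3 [:: 0;0;2] [:: 1;0;1]) => //;
      [move=> a b; rewrite Eb_delta /TD3; move: a b; tab_tac | vm_compute..].
- subst j; by apply: (@use_table _ _ _ TD2 [:: 0;0;2] [:: 1;0;1]) => //;
    [move=> a b; rewrite Eb_delta /TD2; move: a b; tab_tac | vm_compute..].
Qed.

Lemma free_zeta X k j : (forall c, lang X [:: c]) -> 0 < k ->
  dendric_word (morph_image (Zeta k) X) (nseq j l3).
Proof.
move=> HX Hk.
have Hw : l1 \notin nseq j l3 by rewrite mem_nseq negb_and l13 orbT.
case: (posnP j) => [->|Hj0].
  by apply: (@use_table _ _ _ TZ0 [:: 0;4;2] [:: 3;1;1]) => //;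
    [move=> a b; rewrite Eb_zeta /TZ0; move: a b; tab_tac | vm_compute..].
case: (ltngtP j k) => Hjk.
- by apply: (@use_table _ _ _ TZ1 [:: 0;0;2] [:: 3;0;1]) => //;
    [move=> a b; rewrite Eb_zeta /TZ1; move: a b; tab_tac | vm_compute..].
- case: (ltngtP j k.+1) => Hjk1.
  + lia.
  + by apply: (@use_table _ _ _ Tnone [:: 0;0;2] [:: 1;0;1]) => //;
      [move=> a b; rewrite Eb_zeta /Tnone; move: a b; tab_tac | vm_compute..].
  + subst j; by apply: (@use_table _ _ _ TZ3 [:: 0;0;2] [:: 1;0;1]) => //;
      [move=> a b; rewrite Eb_zeta /TZ3; move: a b; tab_tac | vm_compute..].
- subst j; by apply: (@use_table _ _ _ TZ2 [:: 0;0;2] [:: 1;0;1]) => //;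
    [move=> a b; rewrite Eb_zeta /TZ2; move: a b; tab_tac | vm_compute..].
Qed.

Definition root (A : rel vtx) := nth (inl l1) [seq u <- vlist | has (A u) vlist] 0.
Definition bfsd (A : rel vtx) (u : vtx) := find (fun n => u \in iter n (step A) [:: root A]) (iota 0 7).

Definition cand : seq word := [:: [::]; [:: l2]; [:: l3]; [:: l2; l2]; [:: l2; l3]; [:: l3; l2]; [:: l3; l3]].

Definition dtab (tab : seq nat) (v : vtx) := nth 0 tab (index v vlist).
Definition chkw s w := let A := relT (Ebl s w) in let d := dtab (map (bfsd A) vlist) in
  [&& chk1 A d, chk2 A d & chk3 A].
Definition chk_all s := all (chkw s) cand.

Lemma chk_alpha : chk_all Alpha. Proof. by vm_compute. Qed.
Lemma chk_beta : chk_all Beta. Proof. by vm_compute. Qed.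
Lemma chk_gamma : chk_all Gamma. Proof. by vm_compute. Qed.
Lemma chk_eta : chk_all Eta. Proof. by vm_compute. Qed.

Definition conc s := match s with Alpha | Beta | Gamma | Eta => true | _ => false end.

Lemma conc_size s c : conc s -> size (morph s c) <= 3.
Proof. by case: s => // _; case: (letter_cases c) => ->. Qed.

Lemma chk_conc s : conc s -> chk_all s.
Proof.
case: s => [_|_|_|_|k Hs|k Hs].
- exact: chk_alpha.
- exact: chk_beta.
- exact: chk_gamma.
- exact: chk_eta.
- by [].
- by [].
Qed.

Lemma chk_none : [&& chk1 (relT Tnone) (dT [::] [::]), chk2 (relT Tnone) (dT [::] [::]) & chk3 (relT Tnone)].
Proof. by vm_compute. Qed.

Lemma helper_sz (n m : nat) : 2 < n -> m <= 3 -> n.+1 < m.+1 -> False.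
Proof. lia. Qed.

Lemma free_conc s X w : conc s -> (forall c, lang X [:: c]) -> l1 \notin w ->
  dendric_word (morph_image s X) w.
Proof.
move=> Hs HX Hw.
case: (leqP (size w) 2) => Hsz; last first.
  have /and3P [C1 C2 C3] := chk_none.
  apply: (@use_table _ _ _ Tnone [::] [::]) => // a b.
  apply/negbTE/existsP => [[c Hc]].
  have := infix_size Hc; rewrite /= !size_rcons; have := conc_size c Hs.
  exact: helper_sz Hsz.
have Hc : w \in cand.
  move: Hw Hsz; case: w => [|x [|y [|z w]]] //=; rewrite !inE;
    case: (letter_cases x) => ->; rewrite ?eqxx //;
    try (case: (letter_cases y) => ->; rewrite ?eqxx //).
have /and3P [C1 C2 C3] := allP (chk_conc Hs) w Hc.
apply: (tree_bool2 (A := relT (Ebl s w)) (d := dtab (map (bfsd (relT (Ebl s w))) vlist))) => //.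
apply: relT_eq (relT_ok s HX Hw) => a b; exact: Eb_Ebl.
Qed.

Lemma a_is_l1 (T : word) a w b : infix (a :: rcons w b) (l1 :: T) -> l2 \notin behead T ->
  l2 \in w -> a = l1.
Proof.
move=> /infixP [L [R E]] HT Hw.
case: L E => [|x L] /=; first by case=> ->.
case=> _ ET; exfalso; move/negP: HT; apply.
have Hw' : l2 \in rcons w b by rewrite mem_rcons inE Hw orbT.
rewrite ET; case: L {ET} => [|y L] /=.
  by have := mem_cat l2 (rcons w b) R; rewrite Hw' /= => ->.
have := mem_cat l2 L (a :: rcons w b ++ R); rewrite inE.
have := mem_cat l2 (rcons w b) R; rewrite Hw' /= => ->.
by rewrite orbT => ->; rewrite orbT.
Qed.

Lemma nl2a m : l2 \notin rcons (nseq m l3) l1.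
Proof. by rewrite mem_rcons inE mem_nseq l21 l23 andbF. Qed.

Lemma nl2b m : l2 \notin behead (rcons (nseq m l3) l1).
Proof. by case: m => [|m]; [ | exact: nl2a]. Qed.

Lemma dz_block s c : (exists k, s = Delta k) \/ (exists k, s = Zeta k) ->
  exists T, rcons (morph s c) l1 = l1 :: T /\ l2 \notin behead T.
Proof.
case=> [[k ->]|[k ->]]; case: (letter_cases c) => ->.
- by exists [:: l1].
- by exists (l2 :: rcons (nseq k l3) l1); split; [ | exact: nl2a].
- by exists (l2 :: rcons (nseq k.+1 l3) l1); split; [ | exact: nl2a].
- by exists (rcons (nseq k l3) l1); split; [ | exact: nl2b].
- by exists [:: l2; l1].
- by exists (rcons (nseq k.+1 l3) l1); split; [ | exact: nl2b].
Qed.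

Lemma free_dz s X w : (exists k, s = Delta k) \/ (exists k, s = Zeta k) ->
  (forall c, lang X [:: c]) -> l1 \notin w -> l2 \in w -> lang (morph_image s X) w ->
  dendric_word (morph_image s X) w.
Proof.
move=> Hs HX Hw1 Hw2 Hw.
have H : forall a, lang (morph_image s X) (a :: w) -> a = l1.
  move=> a Ha; have [[a'|b] He] := @vtx_edge _ w (inl a) Ha => //.
  have /existsP [c Hc] := iffLR (edge_free s a b HX Hw1) He.
  have [T [ET HT]] := dz_block c Hs.
  by rewrite ET in Hc; apply: a_is_l1 Hc HT Hw2.
apply: star_left => // a a' Ha Ha'.
by rewrite (H _ Ha) (H _ Ha').
Qed.

Lemma free_case s X w : in_S3 s -> (forall c, lang X [:: c]) -> l1 \notin w ->
  lang (morph_image s X) w -> dendric_word (morph_image s X) w.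
Proof.
move=> Hs HX Hw1 Hw.
case Hc: (conc s); first exact: free_conc.
have Hdz : (exists k, s = Delta k) \/ (exists k, s = Zeta k).
  by clear -Hs Hc; case: s Hs Hc => // k _ _; [left|right]; exists k.
case Hall: (all (pred1 l3) w).
  move/all_pred1P: Hall => ->.
  case: Hdz Hs => [[k ->]|[k ->]] /= Hk.
  - exact: free_delta.
  - exact: free_zeta.
apply: free_dz => //.
move/negbT: Hall; rewrite -has_predC => /hasP [x Hx /= Hx3].
case: (letter_cases x) Hx Hx3 => -> //.
by move=> Hx; rewrite Hx in Hw1.
Qed.

Lemma all_letters X : shift_space X -> forall c, lang X [:: c].
Proof. by case. Qed.

Theorem lemma5p5 (X : subshift) (s : S3) :
  shift_space X -> dendric_shift X -> in_S3 s ->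
  (dendric_shift (morph_image s X) <-> DP X s).
Proof.
move=> HX _ Hs; have HL := all_letters HX; split.
  move=> HY v Hv u [Hne HuY Hin _] Hb; exact: HY u HuY.
move=> HDP w Hw.
case: (Classical_Prop.classic (bispecial (morph_image s X) w)) => Hb; last first.
  exact: nonbisp_dendric.
case Hin: (l1 \in w).
  have [v [Hv Hext]] := ext_of_lang Hw Hin.
  exact: HDP v Hv w Hext Hb.
apply: free_case => //.
by rewrite Hin.
Qed.
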